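(* Let $N\ge 4$ be even and let $P_1,\dots,P_N$ be an $N$-periodic billiard trajectory in $E$. For $j=1,2$ let $P_{j,i}^{-1}$ be the inversion of $P_i$ in the unit circle centered at $f_j$, i.e. $P_{j,i}^{-1}=f_j+\dfrac{P_i-f_j}{|P_i-f_j|^2}$, and let $A_j^\dagger$ be the signed area of the polygon $P_{j,1}^{-1},\dots,P_{j,N}^{-1}$. Then $A_1^\dagger=A_2^\dagger$, i.e. $A_1^\dagger/A_2^\dagger=1$.
   Context: Let $E$ be the ellipse $x^2/a^2+y^2/b^2=1$ with $a>b>0$, center $O=(0,0)$ and foci $f_1=(-\sqrt{a^2-b^2},0)$, $f_2=(\sqrt{a^2-b^2},0)$. An $N$-periodic billiard trajectory is a convex polygon with vertices $P_1,\dots,P_N\in E$ (indices mod $N$), listed counterclockwise and winding once around $O$, with $P_i\neq P_{i+1}$, such that at every vertex $P_i$ the normal line to $E$ at $P_i$ bisects the angle $\angle P_{i-1}P_iP_{i+1}$, and all of whose sides are tangent to a common ellipse confocal with $E$. The signed area of a polygon with vertices $W_i=(x_i,y_i)$, $i=1,\dots,N$ (indices mod $N$), is $S=\tfrac12\sum_{i=1}^N (x_iy_{i+1}-x_{i+1}y_i)$. *)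

(* Defs.v *)
From Stdlib Require Import Reals Lra List.
Open Scope R_scope.

Definition pt : Type := (R * R)%type.

Definition padd (p q : pt) : pt := (fst p + fst q, snd p + snd q).
Definition psub (p q : pt) : pt := (fst p - fst q, snd p - snd q).
Definition pscale (c : R) (p : pt) : pt := (c * fst p, c * snd p).
Definition cross (u v : pt) : R := fst u * snd v - snd u * fst v.
Definition nrm2 (p : pt) : R := fst p ^ 2 + snd p ^ 2.
Definition nrm (p : pt) : R := sqrt (nrm2 p).

Definition on_ellipse (al be : R) (p : pt) : Prop :=
  fst p ^ 2 / al ^ 2 + snd p ^ 2 / be ^ 2 = 1.

Definition focus1 (a b : R) : pt := (- sqrt (a ^ 2 - b ^ 2), 0).
Definition focus2 (a b : R) : pt := (sqrt (a ^ 2 - b ^ 2), 0).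

(* normal line to E at P (direction (x/a^2, y/b^2)) bisects the angle
   Pm P Pp : it is parallel to the sum of the unit vectors P->Pm and P->Pp *)
Definition normal_bisects (a b : R) (Pm P Pp : pt) : Prop :=
  let n := (fst P / a ^ 2, snd P / b ^ 2) in
  let u := pscale (/ nrm (psub Pm P)) (psub Pm P) in
  let v := pscale (/ nrm (psub Pp P)) (psub Pp P) in
  cross n (padd u v) = 0.

Definition line_tangent (al be : R) (P Q : pt) : Prop :=
  exists! t : R, on_ellipse al be (padd P (pscale t (psub Q P))).

Definition confocal (a b al be : R) : Prop :=
  0 < be /\ be < al /\ al ^ 2 - be ^ 2 = a ^ 2 - b ^ 2.

Definition billiard_traj (a b : R) (N : nat) (P : nat -> pt) : Prop :=
  (forall i, P (i + N)%nat = P i) /\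
  (forall i, on_ellipse a b (P i)) /\
  (forall i, P i <> P (S i)) /\
  (* convex polygon, counterclockwise: every vertex lies on the left
     (or on) each directed side line *)
  (forall i j, 0 <= cross (psub (P (S i)) (P i)) (psub (P j) (P i))) /\
  (* counterclockwise and winding exactly once around O: continuous polar
     angle with increments in (0, pi), total increase 2 pi *)
  (exists phi : nat -> R,
      (forall i, (i <= N)%nat ->
         P i = (nrm (P i) * cos (phi i), nrm (P i) * sin (phi i))) /\
      (forall i, (i < N)%nat -> phi i < phi (S i) < phi i + PI) /\
      phi N = phi O + 2 * PI) /\
  (forall i, normal_bisects a b (P i) (P (S i)) (P (S (S i)))) /\
  (exists al be, confocal a b al be /\
     forall i, line_tangent al be (P i) (P (S i))).

Definition signed_area (W : nat -> pt) (N : nat) : R :=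
  / 2 * fold_right Rplus 0
    (map (fun i => fst (W i) * snd (W (S i)) - fst (W (S i)) * snd (W i))
         (seq 0 N)).

Definition inv_circle (f p : pt) : pt :=
  padd f (pscale (/ nrm2 (psub p f)) (psub p f)).

(* Main.v *)
Require Import Defs.
From Stdlib Require Import Reals Arith Lra Psatz List Lia.
From Coquelicot Require Import Coquelicot.
Open Scope R_scope.

Lemma const_of_deriv0 (f : R -> R) :
  (forall x, is_derive f x 0) -> forall x y, f x = f y.
Proof.
  intros H x y.
  assert (K : forall u v, u < v -> f u = f v).
  { intros u v Huv.
    destruct (MVT_cor2 f (fun _ => 0) u v Huv) as [c [Hc _]].
    - intros c _. apply is_derive_Reals. apply H.
    - lra. }
  destruct (Rtotal_order x y) as [Hl|[He|Hg]].
  - now apply K.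
  - now subst.
  - symmetry; now apply K.
Qed.

Lemma incr_of_deriv_pos (f f' : R -> R) :
  (forall x, is_derive f x (f' x)) -> (forall x, 0 < f' x) ->
  forall x y, x < y -> f x < f y.
Proof.
  intros H Hp x y Hxy.
  destruct (MVT_cor2 f f' x y Hxy) as [c [Hc _]].
  - intros c _. apply is_derive_Reals. apply H.
  - specialize (Hp c). nra.
Qed.

Lemma is_derive_compR (f g : R -> R) x df dg :
  is_derive f (g x) df -> is_derive g x dg -> is_derive (fun x => f (g x)) x (dg * df).
Proof. intros H1 H2. apply (is_derive_comp f g x df dg H1 H2). Qed.

Section W.
Variables a b lam : R.
Hypothesis Hb : 0 < b.
Hypothesis Hab : b < a.
Hypothesis Hl : 0 < lam.
Hypothesis Hlb : lam < b ^ 2.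

Definition wD (x : R) := (a^2 - lam) - (a^2 - b^2) * cos x ^ 2.
Definition w (x : R) := / sqrt (wD x).

Lemma wD_pos x : 0 < wD x.
Proof.
  unfold wD. assert (H := COS_bound x).
  assert (0 <= cos x ^ 2 <= 1) by (split; nra).
  assert (b^2 < a^2) by nra. nra.
Qed.

Lemma w_pos x : 0 < w x.
Proof. unfold w. apply Rinv_0_lt_compat, sqrt_lt_R0, wD_pos. Qed.

Lemma w_cont x : continuous w x.
Proof.
  unfold w. apply (continuous_comp (fun x => sqrt (wD x)) Rinv).
  - apply continuous_sqrt_comp. unfold wD.
    apply (continuous_minus (fun _ => a^2-lam) (fun x => (a^2-b^2)*cos x^2)).
    apply continuous_const.
    apply (continuous_mult (fun _ => a^2-b^2) (fun x => cos x^2)). apply continuous_const.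
    apply (continuous_comp cos (fun y => y ^ 2)). apply continuous_cos.
    apply (continuous_mult (fun y => y) (fun y => y ^ 1)). apply continuous_id.
    apply (continuous_mult (fun y => y) (fun y => 1)). apply continuous_id. apply continuous_const.
  - apply continuous_Rinv. apply Rgt_not_eq, sqrt_lt_R0, wD_pos.
Qed.

Definition F (x : R) := RInt w 0 x.

Lemma F_deriv x : is_derive F x (w x).
Proof.
  apply (is_derive_RInt w F 0).
  - apply filter_forall. intros y. unfold F. apply (RInt_correct w 0 y).
    apply ex_RInt_continuous. intros z _. apply w_cont.
  - apply w_cont.
Qed.

Lemma F_incr x y : x < y -> F x < F y.
Proof. apply (incr_of_deriv_pos F w F_deriv w_pos). Qed.

Lemma F_inj x y : F x = F y -> x = y.
Proof.
  intros H. destruct (Rtotal_order x y) as [Hl'|[He|Hg]]; auto.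
  - apply F_incr in Hl'; lra.
  - apply F_incr in Hg; lra.
Qed.

Lemma F_halfper x y : F (x + PI) - F x = F (y + PI) - F y.
Proof.
  apply (const_of_deriv0 (fun x => F (x + PI) - F x)).
  intros z.
  replace 0 with (1 * w (z+PI) - w z) by (unfold w, wD; rewrite neg_cos; replace ((- cos z)^2) with (cos z ^2) by ring; ring).
  apply (is_derive_minus (fun x => F (x + PI)) F).
  - apply (is_derive_compR F (fun x => x + PI)). apply F_deriv.
    auto_derive; auto; ring.
  - apply F_deriv.
Qed.
End W.

Section G.
Variables a b lam : R.
Hypothesis Hb : 0 < b.
Hypothesis Hab : b < a.
Hypothesis Hl : 0 < lam.
Hypothesis Hlb : lam < b ^ 2.

Definition cA := (a^2 - lam) / a^2.
Definition cB := (b^2 - lam) / b^2.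
Definition cq := cA - cB.
Definition Rm (m : R) := cA * cos m ^ 2 + cB * sin m ^ 2.
Definition Ym (m : R) := (1 - Rm m) / Rm m.
Definition hh (m : R) := atan (sqrt (Ym m)).

Lemma a_pos : 0 < a. Proof. lra. Qed.
Lemma cB_pos : 0 < cB.
Proof. unfold cB. apply Rdiv_lt_0_compat; nra. Qed.
Lemma cA_lt1 : cA < 1.
Proof. unfold cA. apply (Rmult_lt_reg_r (a^2)). nra. field_simplify; nra. Qed.
Lemma cq_pos : 0 <= cq.
Proof.
  unfold cq, cA, cB.
  assert (0 < a^2) by nra. assert (0 < b^2) by nra.
  assert (a <> 0) by lra. assert (b <> 0) by lra.
  replace ((a ^ 2 - lam) / a ^ 2 - (b ^ 2 - lam) / b ^ 2) with (lam * (a^2 - b^2) / (a^2 * b^2)) by (field; auto).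
  assert (0 < a^2 - b^2) by nra.
  apply Rlt_le, Rdiv_lt_0_compat; apply Rmult_lt_0_compat; lra.
Qed.

Lemma Rm_bounds m : 0 < Rm m < 1.
Proof.
  unfold Rm. pose proof cB_pos. pose proof cA_lt1. pose proof cq_pos.
  pose proof (sin2_cos2 m). unfold Rsqr in H2. unfold cq in H1.
  assert (0 <= cos m ^2) by nra. assert (0 <= sin m ^2) by nra.
  split; nra.
Qed.

Lemma Ym_pos m : 0 < Ym m.
Proof. unfold Ym. pose proof (Rm_bounds m). apply Rdiv_lt_0_compat; lra. Qed.

Lemma hh_bounds m : 0 < hh m < PI / 2.
Proof.
  unfold hh. split.
  - rewrite <- atan_0. apply atan_increasing. apply sqrt_lt_R0, Ym_pos.
  - apply atan_bound.
Qed.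

Lemma cos_hh2 m : cos (hh m) ^ 2 = Rm m.
Proof.
  unfold hh. rewrite cos_atan. unfold Rsqr. rewrite sqrt_sqrt by (apply Rlt_le, Ym_pos).
  pose proof (Rm_bounds m).
  assert (0 < 1 + Ym m) by (pose proof (Ym_pos m); lra).
  replace ((1 / sqrt (1 + Ym m)) ^ 2) with (1 / (sqrt (1 + Ym m))^2) by (field; apply Rgt_not_eq, sqrt_lt_R0; lra).
  rewrite pow2_sqrt by lra. unfold Ym. field. split; lra.
Qed.

Lemma sin_hh m : sin (hh m) = sqrt (Ym m) * cos (hh m).
Proof.
  unfold hh. rewrite cos_atan, sin_atan. field.
  apply Rgt_not_eq, sqrt_lt_R0. pose proof (Ym_pos m). unfold Rsqr. nra.
Qed.

Definition hp (m : R) := cq * sin m * cos m / (Rm m * sqrt (Ym m)).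

Lemma hh_deriv m : is_derive hh m (hp m).
Proof.
  pose proof (Rm_bounds m) as HR. pose proof (Ym_pos m) as HY.
  assert (Hs : 0 < sqrt (Ym m)) by (apply sqrt_lt_R0; auto).
  unfold hh.
  assert (D1 : is_derive atan (sqrt (Ym m)) (/ (1 + (sqrt (Ym m))^2))).
  { apply is_derive_Reals.
    apply derivable_pt_lim_atan. }
  assert (D2 : is_derive (fun m => sqrt (Ym m)) m (cq * sin m * cos m * 2 / (Rm m)^2 / (2 * sqrt (Ym m)))).
  { unfold Ym, Rm. auto_derive;
    (assert (E1 : cA * (cos m * (cos m * 1)) + cB * (sin m * (sin m * 1)) = Rm m) by (unfold Rm; ring));
    rewrite E1;
    (assert (E2 : (1 + - Rm m) * / Rm m = Ym m) by (unfold Ym; field; lra));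
    (assert (E3 : cA * cos m ^ 2 + cB * sin m ^ 2 = Rm m) by (unfold Rm; ring)); rewrite ?E2, ?E3.
    - split; [lra|]. split; [lra|auto].
    - fold (Ym m). unfold cq. field. split; lra. }
  apply (is_derive_ext_loc (fun m => atan (sqrt (Ym m)))); [apply filter_forall; intros; reflexivity|].
  replace (hp m) with ((cq * sin m * cos m * 2 / (Rm m)^2 / (2 * sqrt (Ym m))) * / (1 + sqrt (Ym m) ^ 2)).
  apply (is_derive_compR atan (fun m => sqrt (Ym m)) m _ _ D1 D2).
  unfold hp. rewrite pow2_sqrt by lra. unfold Ym. field. repeat split; try lra.
  fold (Ym m). lra.
Qed.

Lemma key_id cm sm ch sh :
  cm^2 + sm^2 = 1 -> ch^2 = cA * cm^2 + cB * sm^2 -> sh^2 + ch^2 = 1 ->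
  (a^2 - lam) - (a^2 - b^2) * (cm * ch - sm * sh)^2 = (a^2*b^2/lam) * (sh*ch + cq*sm*cm)^2 /\
  (a^2 - lam) - (a^2 - b^2) * (cm * ch + sm * sh)^2 = (a^2*b^2/lam) * (sh*ch - cq*sm*cm)^2.
Proof.
  intros H1 H2 H3.
  assert (Hs : sm^2 = 1 - cm^2) by lra.
  assert (Hh : sh^2 = 1 - ch^2) by lra.
  assert (a <> 0) by lra. assert (b <> 0) by lra. assert (lam <> 0) by lra.
  split.
  - replace ((a^2 - lam) - (a^2 - b^2) * (cm * ch - sm * sh)^2) with
      ((a^2 - lam) - (a^2 - b^2) * (cm^2 * ch^2 + sm^2 * sh^2) + 2*(a^2-b^2)*cm*ch*sm*sh) by ring.
    replace ((a^2*b^2/lam) * (sh*ch + cq*sm*cm)^2) with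
      ((a^2*b^2/lam) * (sh^2*ch^2 + cq^2*sm^2*cm^2) + 2*(a^2*b^2/lam)*cq*sh*ch*sm*cm) by ring.
    rewrite Hh, Hs, H2, Hs. unfold cq, cA, cB. field. auto.
  - replace ((a^2 - lam) - (a^2 - b^2) * (cm * ch + sm * sh)^2) with
      ((a^2 - lam) - (a^2 - b^2) * (cm^2 * ch^2 + sm^2 * sh^2) - 2*(a^2-b^2)*cm*ch*sm*sh) by ring.
    replace ((a^2*b^2/lam) * (sh*ch - cq*sm*cm)^2) with
      ((a^2*b^2/lam) * (sh^2*ch^2 + cq^2*sm^2*cm^2) - 2*(a^2*b^2/lam)*cq*sh*ch*sm*cm) by ring.
    rewrite Hh, Hs, H2, Hs. unfold cq, cA, cB. field. auto.
Qed.

Lemma hh_facts m :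
  0 < cos (hh m) /\ 0 < sin (hh m) /\ cos (hh m)^2 = Rm m /\ sin (hh m)^2 + cos (hh m)^2 = 1.
Proof.
  pose proof (hh_bounds m). split; [|split; [|split]].
  - apply cos_gt_0; lra.
  - apply sin_gt_0; lra.
  - apply cos_hh2.
  - pose proof (sin2_cos2 (hh m)). unfold Rsqr in H0. lra.
Qed.

Lemma X_pos m : let sh := sin (hh m) in let ch := cos (hh m) in
  0 < sh*ch + cq * sin m * cos m /\ 0 < sh*ch - cq * sin m * cos m.
Proof.
  intros sh ch. destruct (hh_facts m) as (Hc & Hs & H2 & H3). fold sh ch in Hc, Hs, H2, H3.
  pose proof cB_pos. pose proof cA_lt1. pose proof cq_pos.
  pose proof (sin2_cos2 m). unfold Rsqr in H4.
  unfold Rm in H2.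
  assert (E : (sh*ch)^2 - (cq*sin m*cos m)^2 > 0).
  { assert (Hs2 : sh^2 = (1 - cA) + cq * sin m ^2) by (unfold cq; nra).
    assert (Hc2 : ch^2 = cB + cq * cos m ^2) by (unfold cq; nra).
    replace ((sh*ch)^2 - (cq*sin m*cos m)^2) with (sh^2 * ch^2 - cq^2 * sin m^2 * cos m^2) by ring.
    rewrite Hs2, Hc2.
    assert (0 <= sin m ^2) by nra. assert (0 <= cos m ^2) by nra.
    assert (0 < (1 - cA) * cB) by nra.
    assert (0 <= (1 - cA) * cq * cos m ^2) by (apply Rmult_le_pos; nra).
    assert (0 <= cq * sin m ^2 * cB) by (apply Rmult_le_pos; nra).
    nra. }
  assert (0 < sh*ch) by nra.
  split; nra.
Qed.

Lemma id_der (x : R) : is_derive (fun t : R => t) x 1.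
Proof. auto_derive; auto. Qed.

Definition Gf (m : R) := F a b lam (m + hh m) - F a b lam (m - hh m).

Lemma Gf_deriv m : is_derive Gf m 0.
Proof.
  assert (D1 : is_derive (fun m => m + hh m) m (1 + hp m)).
  { apply (is_derive_plus (fun m => m) hh). apply id_der. apply hh_deriv. }
  assert (D2 : is_derive (fun m => m - hh m) m (1 - hp m)).
  { apply (is_derive_minus (fun m => m) hh). apply id_der. apply hh_deriv. }
  assert (E1 := is_derive_compR (F a b lam) _ m _ _ (F_deriv a b lam Hb Hab Hlb _) D1).
  assert (E2 := is_derive_compR (F a b lam) _ m _ _ (F_deriv a b lam Hb Hab Hlb _) D2).
  unfold Gf.
  replace 0 with ((1 + hp m) * w a b lam (m + hh m) - (1 - hp m) * w a b lam (m - hh m)).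
  apply (is_derive_minus (fun m => F a b lam (m + hh m)) (fun m => F a b lam (m - hh m))); auto.
  destruct (hh_facts m) as (Hc & Hs & H2 & H3).
  destruct (X_pos m) as [Xp Xm].
  set (sh := sin (hh m)) in *. set (ch := cos (hh m)) in *.
  assert (Hsq : sqrt (Ym m) = sh / ch).
  { pose proof (sin_hh m). fold sh ch in H. rewrite H. field. lra. }
  assert (Hhp : hp m = cq * sin m * cos m / (sh * ch)).
  { unfold hp. rewrite Hsq, <- H2. field. lra. }
  pose proof (sin2_cos2 m) as Hm. unfold Rsqr in Hm.
  destruct (key_id (cos m) (sin m) ch sh) as [K1 K2]; [lra| unfold Rm in H2; lra| lra|].
  assert (Hw1 : w a b lam (m + hh m) = sqrt lam / (a * b * (sh*ch + cq*sin m*cos m))).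
  { assert (P : 0 < a*b*(sh*ch + cq*sin m*cos m)) by (apply Rmult_lt_0_compat; nra).
    assert (Q : 0 < sqrt lam) by (apply sqrt_lt_R0; lra).
    unfold w, wD. rewrite cos_plus. fold sh ch. rewrite K1.
    replace (a ^ 2 * b ^ 2 / lam * (sh * ch + cq * sin m * cos m) ^ 2) with
       ((a * b * (sh * ch + cq * sin m * cos m) / sqrt lam)^2).
    - rewrite sqrt_pow2 by (apply Rlt_le, Rdiv_lt_0_compat; lra). field. lra.
    - assert (SL : sqrt lam ^ 2 = lam) by (apply pow2_sqrt; lra). rewrite <- SL at 2. field. lra. }
  assert (Hw2 : w a b lam (m - hh m) = sqrt lam / (a * b * (sh*ch - cq*sin m*cos m))).
  { assert (P : 0 < a*b*(sh*ch - cq*sin m*cos m)) by (apply Rmult_lt_0_compat; nra).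
    assert (Q : 0 < sqrt lam) by (apply sqrt_lt_R0; lra).
    unfold w, wD. rewrite cos_minus. fold sh ch. rewrite K2.
    replace (a ^ 2 * b ^ 2 / lam * (sh * ch - cq * sin m * cos m) ^ 2) with
       ((a * b * (sh * ch - cq * sin m * cos m) / sqrt lam)^2).
    - rewrite sqrt_pow2 by (apply Rlt_le, Rdiv_lt_0_compat; lra). field. lra.
    - assert (SL : sqrt lam ^ 2 = lam) by (apply pow2_sqrt; lra). rewrite <- SL at 2. field. lra. }
  rewrite Hw1, Hw2, Hhp. field. repeat split; nra.
Qed.

Lemma Gf_const m : Gf m = Gf 0.
Proof. apply const_of_deriv0, Gf_deriv. Qed.
End G.

Section B.
Variables a b lam : R.
Hypothesis Hb : 0 < b.
Hypothesis Hab : b < a.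
Hypothesis Hl : 0 < lam.
Hypothesis Hlb : lam < b ^ 2.

Lemma chord_step s t :
  s < t < s + PI ->
  (b^2 - lam) * (a * cos t - a * cos s)^2 + (a^2 - lam) * (b * sin t - b * sin s)^2
  = (a * cos s * (b * sin t) - b * sin s * (a * cos t))^2 ->
  F a b lam t - F a b lam s = Gf a b lam 0.
Proof.
  intros Hst Htan.
  set (m := (s + t) / 2). set (h := (t - s) / 2).
  assert (Es : s = m - h) by (unfold m, h; field).
  assert (Et : t = m + h) by (unfold m, h; field).
  assert (Hh : 0 < h < PI/2) by (unfold h; lra).
  assert (Hch : 0 < cos h) by (apply cos_gt_0; lra).
  assert (Hsh : 0 < sin h) by (apply sin_gt_0; lra).
  pose proof (sin2_cos2 m) as Hm. unfold Rsqr in Hm.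
  pose proof (sin2_cos2 h) as Hh2. unfold Rsqr in Hh2.
  assert (Hc2 : cos h ^ 2 = Rm a b lam m).
  { rewrite Es, Et in Htan. rewrite cos_plus, cos_minus, sin_plus, sin_minus in Htan.
    set (cm := cos m) in *. set (sm := sin m) in *. set (ch := cos h) in *. set (sh := sin h) in *.
    replace ((b ^ 2 - lam) * (a * (cm * ch - sm * sh) - a * (cm * ch + sm * sh)) ^ 2 +
       (a ^ 2 - lam) * (b * (sm * ch + cm * sh) - b * (sm * ch - cm * sh)) ^ 2)
      with (4 * sh^2 * ((b ^ 2 - lam) * a^2 * sm^2 + (a ^ 2 - lam) * b^2 * cm^2)) in Htan by ring.
    replace ((a * (cm * ch + sm * sh) * (b * (sm * ch + cm * sh)) -
       b * (sm * ch - cm * sh) * (a * (cm * ch - sm * sh))) ^ 2)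
      with (4 * sh^2 * (a^2 * b^2 * ch^2 * (sm * sm + cm * cm)^2)) in Htan by ring.
    rewrite Hm in Htan.
    assert (H4 : 0 < 4 * sh^2) by nra.
    apply Rmult_eq_reg_l in Htan; [|lra].
    unfold Rm, cA, cB. fold cm sm.
    assert (0 < a^2) by nra. assert (0 < b^2) by nra.
    apply (Rmult_eq_reg_l (a^2*b^2)); [|nra].
    field_simplify; [lra| split; lra]. }
  assert (HY : tan h = sqrt (Ym a b lam m)).
  { unfold Ym. rewrite <- Hc2. unfold tan.
    rewrite <- (sqrt_pow2 (sin h / cos h)) by (apply Rlt_le, Rdiv_lt_0_compat; lra).
    f_equal. field_simplify; try lra. f_equal. lra. }
  assert (Hhh : hh a b lam m = h).
  { unfold hh. rewrite <- HY. apply atan_tan. lra. }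
  rewrite <- (Gf_const a b lam Hb Hab Hl Hlb m). unfold Gf. rewrite Hhh, <- Es, <- Et. reflexivity.
Qed.
End B.

Lemma sq_pos x : x <> 0 -> 0 < x^2.
Proof. intros H. destruct (Rtotal_order x 0) as [h|[h|h]]; [nra|contradiction|nra]. Qed.

Lemma quad_disc0 (c2 c1 c0 : R) : 0 < c2 ->
  (exists! t, c2 * t^2 + c1 * t + c0 = 0) -> c1^2 - 4 * c2 * c0 = 0.
Proof.
  intros H2 [t0 [Ht0 Hu]].
  set (d := c1^2 - 4*c2*c0).
  destruct (Rtotal_order d 0) as [Hn|[He|Hp]]; auto.
  - exfalso. assert (E : c2 * (c2 * t0^2 + c1 * t0 + c0) = (c2*t0 + c1/2)^2 - d/4) by (unfold d; field).
    rewrite Ht0 in E. assert (0 <= (c2*t0+c1/2)^2) by (apply pow2_ge_0). lra.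
  - exfalso.
    set (r := sqrt d).
    assert (Hr : r * r = d) by (apply sqrt_sqrt; lra).
    assert (Hr0 : 0 < r) by (apply sqrt_lt_R0; lra).
    assert (R1 : c2 * ((-c1 + r)/(2*c2))^2 + c1 * ((-c1 + r)/(2*c2)) + c0 = 0).
    { field_simplify; [|lra]. replace (r^2) with d by (rewrite <- Hr; ring). unfold d. field. lra. }
    assert (R2 : c2 * ((-c1 - r)/(2*c2))^2 + c1 * ((-c1 - r)/(2*c2)) + c0 = 0).
    { field_simplify; [|lra]. replace (r^2) with d by (rewrite <- Hr; ring). unfold d. field. lra. }
    apply Hu in R1. apply Hu in R2.
    assert ((-c1 + r)/(2*c2) = (-c1 - r)/(2*c2)) by congruence.
    assert (-c1 + r = -c1 - r).
    { apply (Rmult_eq_reg_r (/(2*c2))). exact H. apply Rgt_not_eq. apply Rinv_0_lt_compat. lra. }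
    lra.
Qed.

Lemma on_ell_line al be P Q t : al <> 0 -> be <> 0 ->
  (on_ellipse al be (padd P (pscale t (psub Q P))) <->
   (( (fst Q - fst P)^2/al^2 + (snd Q - snd P)^2/be^2) * t^2
    + (2 * (fst P * (fst Q - fst P) / al^2 + snd P * (snd Q - snd P) / be^2)) * t
    + (fst P ^2 / al^2 + snd P^2/be^2 - 1) = 0)).
Proof.
  intros Ha Hb. unfold on_ellipse, padd, pscale, psub; simpl.
  match goal with |- ?L = 1 <-> ?M = 0 => assert (E : M = L - 1) by (field; auto) end.
  rewrite E. split; intros; lra.
Qed.

Lemma tangent_disc al be P Q : 0 < be -> be < al -> P <> Q -> line_tangent al be P Q ->
  let c2 := (fst Q - fst P)^2/al^2 + (snd Q - snd P)^2/be^2 in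
  let c1 := 2 * (fst P * (fst Q - fst P) / al^2 + snd P * (snd Q - snd P) / be^2) in
  let c0 := fst P ^2 / al^2 + snd P^2/be^2 - 1 in
  0 < c2 /\ c1^2 - 4*c2*c0 = 0 /\ (forall t, c2 * t^2 + c1 * t + c0 = 0 -> forall u, c2 * u^2 + c1 * u + c0 = 0 -> t = u).
Proof.
  intros Hbe Hal HPQ Ht c2 c1 c0.
  assert (Ha0 : al <> 0) by lra. assert (Hb0 : be <> 0) by lra.
  assert (Hc2 : 0 < c2).
  { unfold c2. destruct P as [px py], Q as [qx qy]; cbn [fst snd].
    assert (qx - px <> 0 \/ qy - py <> 0).
    { destruct (Req_dec qx px) as [E|E]; [right| left; lra].
      intro Hy. apply HPQ. subst qx. f_equal. lra. }
    assert (0 < al^2) by nra. assert (0 < be^2) by nra.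
    destruct H.
    - assert (0 < (qx-px)^2/al^2) by (apply Rdiv_lt_0_compat; [apply sq_pos; auto | lra]).
      assert (0 <= (qy-py)^2/be^2) by (apply Rmult_le_pos; [apply pow2_ge_0| apply Rlt_le, Rinv_0_lt_compat, pow_lt; lra]). lra.
    - assert (0 < (qy-py)^2/be^2) by (apply Rdiv_lt_0_compat; [apply sq_pos; auto | lra]).
      assert (0 <= (qx-px)^2/al^2) by (apply Rmult_le_pos; [apply pow2_ge_0| apply Rlt_le, Rinv_0_lt_compat, pow_lt; lra]). lra. }
  destruct Ht as [t0 [Ht0 Hu]].
  assert (Hu' : forall t, c2 * t^2 + c1 * t + c0 = 0 -> t = t0).
  { intros t Ht. symmetry. apply Hu. apply on_ell_line; auto. }
  split; [auto|split].
  - apply quad_disc0; auto. exists t0. split.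
    + apply on_ell_line; auto.
    + intros t Ht. symmetry. apply Hu'. auto.
  - intros t Ht u Hu2. rewrite (Hu' t Ht), (Hu' u Hu2). reflexivity.
Qed.

Lemma tangent_poly al be P Q : 0 < be -> be < al -> P <> Q -> line_tangent al be P Q ->
  be^2 * (fst Q - fst P)^2 + al^2 * (snd Q - snd P)^2 = (fst P * snd Q - snd P * fst Q)^2.
Proof.
  intros Hbe Hal HPQ Ht.
  destruct (tangent_disc al be P Q Hbe Hal HPQ Ht) as [_ [Hd _]].
  assert (Ha0 : al <> 0) by lra. assert (Hb0 : be <> 0) by lra.
  destruct P as [px py], Q as [qx qy]; cbn [fst snd] in *.
  apply Rminus_diag_uniq.
  match type of Hd with ?D = 0 =>
    assert (E : be^2 * (qx - px)^2 + al^2 * (qy - py)^2 - (px * qy - py * qx)^2 = al^2*be^2/4 * D) by (field; auto) end.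
  rewrite E, Hd. ring.
Qed.

Lemma caustic_inside a b al be P Q : 0 < b -> b < a ->
  0 < be -> be < al -> al^2 - be^2 = a^2 - b^2 ->
  on_ellipse a b P -> on_ellipse a b Q -> P <> Q -> line_tangent al be P Q -> al < a.
Proof.
  intros Hb Hab Hbe Hal Hc HP HQ HPQ Ht.
  destruct (Rlt_or_le al a) as [H|H]; auto. exfalso.
  destruct (tangent_disc al be P Q Hbe Hal HPQ Ht) as [H2 [Hd Hu]].
  set (c2 := (fst Q - fst P)^2/al^2 + (snd Q - snd P)^2/be^2) in *.
  set (c1 := 2 * (fst P * (fst Q - fst P) / al^2 + snd P * (snd Q - snd P) / be^2)) in *.
  set (c0 := fst P ^2 / al^2 + snd P^2/be^2 - 1) in *.
  assert (Hbb : b <= be) by nra.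
  assert (Le : forall X, on_ellipse a b X -> fst X^2/al^2 + snd X^2/be^2 <= 1).
  { intros X HX. unfold on_ellipse in HX. rewrite <- HX.
    apply Rplus_le_compat; apply Rmult_le_compat_l; try apply pow2_ge_0;
    apply Rinv_le_contravar; try (apply pow_lt; lra); nra. }
  assert (Hq : forall t, 0 <= c2 * (c2 * t^2 + c1 * t + c0)).
  { intros t. replace (c2 * (c2 * t^2 + c1 * t + c0)) with ((c2*t + c1/2)^2 - (c1^2 - 4*c2*c0)/4) by field.
    rewrite Hd. replace (0/4) with 0 by field. rewrite Rminus_0_r. apply pow2_ge_0. }
  assert (F0 : c2 * 0^2 + c1 * 0 + c0 = 0).
  { pose proof (Hq 0). pose proof (Le P HP). fold c0 in H1.
    assert (c0 <= 0) by (unfold c0 in *; lra).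
    assert (0 <= c0).
    { apply (Rmult_le_reg_l c2); auto. replace (c2 * (c2 * 0^2 + c1*0 + c0)) with (c2 * c0) in H0 by ring. lra. }
    replace (c2 * 0^2 + c1*0 + c0) with c0 by ring. lra. }
  assert (F1 : c2 * 1^2 + c1 * 1 + c0 = 0).
  { pose proof (Hq 1). pose proof (Le Q HQ).
    assert (E : c2 * 1^2 + c1 * 1 + c0 = fst Q ^2/al^2 + snd Q^2/be^2 - 1).
    { unfold c2, c1, c0. field. split; lra. }
    assert (c2 * 1^2 + c1 * 1 + c0 <= 0) by lra.
    assert (0 <= c2 * 1^2 + c1 * 1 + c0).
    { apply (Rmult_le_reg_l c2); auto. lra. }
    lra. }
  pose proof (Hu 0 F0 1 F1). lra.
Qed.

Definition ecc (a b phi : R) : R :=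
  phi + atan ((a - b) * sin phi * cos phi / (b * cos phi ^ 2 + a * sin phi ^ 2)).

Lemma ecc_point a b r phi : 0 < b -> b < a -> 0 <= r ->
  on_ellipse a b (r * cos phi, r * sin phi) ->
  r * cos phi = a * cos (ecc a b phi) /\ r * sin phi = b * sin (ecc a b phi).
Proof.
  intros Hb Hab Hr He. unfold on_ellipse in He. cbn [fst snd] in He.
  set (c := cos phi) in *. set (s := sin phi) in *.
  pose proof (sin2_cos2 phi) as Hsc. unfold Rsqr in Hsc. fold c s in Hsc.
  set (D := b * c^2 + a * s^2).
  assert (HD : 0 < D).
  { unfold D. assert (0 <= c^2) by apply pow2_ge_0. assert (0 <= s^2) by apply pow2_ge_0.
    assert (b * s^2 <= a * s^2) by (apply Rmult_le_compat_r; lra).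
    assert (b*c^2 + b*s^2 = b) by (replace (b*c^2 + b*s^2) with (b*(s*s+c*c)) by ring; rewrite Hsc; ring). lra. }
  set (x := (a - b) * s * c / D).
  set (E := b^2 * c^2 + a^2 * s^2).
  assert (HE : 0 < E).
  { unfold E. assert (0 <= c^2) by apply pow2_ge_0. assert (0 <= s^2) by apply pow2_ge_0.
    assert (b^2 * s^2 <= a^2 * s^2) by (apply Rmult_le_compat_r; nra).
    assert (0 < b^2) by nra.
    assert (b^2*c^2 + b^2*s^2 = b^2) by (replace (b^2*c^2 + b^2*s^2) with (b^2*(s*s+c*c)) by ring; rewrite Hsc; ring). lra. }
  assert (HsE : 0 < sqrt E) by (apply sqrt_lt_R0; auto).
  assert (Hx : sqrt (1 + x²) = sqrt E / D).
  { rewrite <- (sqrt_pow2 (sqrt E / D)) by (apply Rlt_le, Rdiv_lt_0_compat; auto).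
    f_equal. unfold Rdiv. rewrite Rpow_mult_distr, pow2_sqrt by lra.
    unfold Rsqr, x, E, D. field_simplify; try (unfold D in HD; lra). f_equal.
    assert (Hsc2 : s^2 + c^2 - 1 = 0) by nra.
    apply Rminus_diag_uniq.
    match goal with |- ?L - ?R = 0 => replace (L - R) with ((a^2*s^2+b^2*c^2)*(s^2+c^2-1)) by ring end.
    rewrite Hsc2. ring. }
  assert (Hc : cos (ecc a b phi) = b * c / sqrt E).
  { unfold ecc. rewrite cos_plus, cos_atan, sin_atan. fold c s. fold D. fold x. rewrite Hx.
    transitivity ((c*D - s*(a-b)*s*c)/sqrt E); [unfold x; field; split; lra|].
    f_equal. unfold D. transitivity (b*c*(s*s+c*c)); [ring| rewrite Hsc; ring]. }
  assert (Hs : sin (ecc a b phi) = a * s / sqrt E).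
  { unfold ecc. rewrite sin_plus, cos_atan, sin_atan. fold c s. fold D. fold x. rewrite Hx.
    transitivity ((s*D + c*(a-b)*s*c)/sqrt E); [unfold x; field; split; lra|].
    f_equal. unfold D. transitivity (a*s*(s*s+c*c)); [ring| rewrite Hsc; ring]. }
  assert (Hr2 : r = a * b / sqrt E).
  { rewrite <- (sqrt_pow2 r) by auto. rewrite <- (sqrt_pow2 (a*b/sqrt E)) by (apply Rlt_le, Rdiv_lt_0_compat; [apply Rmult_lt_0_compat; lra | exact HsE]).
    f_equal. unfold Rdiv. rewrite Rpow_mult_distr, pow_inv, pow2_sqrt by lra.
    assert (r^2 * E = a^2*b^2).
    { assert (Hab2 : 0 < a^2*b^2) by (apply Rmult_lt_0_compat; apply pow_lt; lra).
      unfold E. apply (Rmult_eq_reg_r (/(a^2*b^2))); [|apply Rgt_not_eq, Rinv_0_lt_compat; lra].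
      rewrite Rinv_r by lra. rewrite <- He. field. lra. }
    transitivity (r^2*E/E); [field; lra|]. rewrite H. field. lra. }
  rewrite Hc, Hs, Hr2. split; field; lra.
Qed.

Lemma ecc_near a b phi : phi - PI/2 < ecc a b phi < phi + PI/2.
Proof. unfold ecc. pose proof (atan_bound ((a - b) * sin phi * cos phi / (b * cos phi ^ 2 + a * sin phi ^ 2))). lra. Qed.

Lemma ecc_per a b phi : ecc a b (phi + 2*PI) = ecc a b phi + 2*PI.
Proof.
  unfold ecc. rewrite sin_plus, cos_plus, sin_2PI, cos_2PI.
  replace (sin phi * 1 + cos phi * 0) with (sin phi) by ring.
  replace (cos phi * 1 - sin phi * 0) with (cos phi) by ring. ring.
Qed.

Lemma sin_pos_range d : 0 < sin d -> - PI < d < 2 * PI -> 0 < d < PI.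
Proof.
  intros Hs Hd. split.
  - destruct (Rlt_or_le 0 d) as [H|H]; auto. exfalso.
    assert (0 <= sin (-d)) by (apply sin_ge_0; lra). rewrite sin_neg in H0. lra.
  - destruct (Rlt_or_le d PI) as [H|H]; auto. exfalso.
    assert (0 <= sin (d - PI)) by (apply sin_ge_0; lra).
    rewrite sin_minus, sin_PI, cos_PI in H0. lra.
Qed.

Lemma nrm_pos_on a b P : on_ellipse a b P -> 0 < nrm P.
Proof.
  intros H. unfold nrm, nrm2. apply sqrt_lt_R0.
  destruct P as [x y]. unfold on_ellipse in H. cbn [fst snd] in *.
  destruct (Req_dec x 0) as [Hx|Hx]; destruct (Req_dec y 0) as [Hy|Hy].
  - subst. exfalso. unfold Rdiv in H. simpl in H. lra.
  - assert (0 < y^2) by (destruct (Rtotal_order y 0) as [h|[h|h]]; [nra|contradiction|nra]).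
    assert (0 <= x^2) by apply pow2_ge_0. lra.
  - assert (0 < x^2) by (destruct (Rtotal_order x 0) as [h|[h|h]]; [nra|contradiction|nra]).
    assert (0 <= y^2) by apply pow2_ge_0. lra.
  - assert (0 < y^2) by (destruct (Rtotal_order y 0) as [h|[h|h]]; [nra|contradiction|nra]).
    assert (0 <= x^2) by apply pow2_ge_0. lra.
Qed.

Lemma ecc_step a b P P' phi phi' : 0 < b -> b < a ->
  on_ellipse a b P -> on_ellipse a b P' ->
  P = (nrm P * cos phi, nrm P * sin phi) -> P' = (nrm P' * cos phi', nrm P' * sin phi') ->
  phi < phi' < phi + PI ->
  ecc a b phi < ecc a b phi' < ecc a b phi + PI.
Proof.
  intros Hb Hab HP HP' EP EP' Hphi.
  pose proof (nrm_pos_on a b P HP) as Hr. pose proof (nrm_pos_on a b P' HP') as Hr'.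
  set (r := nrm P) in *. set (r' := nrm P') in *.
  rewrite EP in HP. rewrite EP' in HP'.
  destruct (ecc_point a b r phi Hb Hab (Rlt_le _ _ Hr) HP) as [C1 S1].
  destruct (ecc_point a b r' phi' Hb Hab (Rlt_le _ _ Hr') HP') as [C2 S2].
  set (s := ecc a b phi) in *. set (s' := ecc a b phi') in *.
  assert (Hsin : 0 < sin (s' - s)).
  { assert (0 < sin (phi' - phi)) by (apply sin_gt_0; lra).
    assert (E : a * b * sin (s' - s) = r * r' * sin (phi' - phi)).
    { rewrite !sin_minus. fold s'.
      transitivity ((a * cos s) * (b * sin s') - (b * sin s) * (a * cos s')); [ring|].
      rewrite <- C1, <- S1, <- C2, <- S2. ring. }
    assert (0 < r * r' * sin (phi' - phi)) by (apply Rmult_lt_0_compat; [apply Rmult_lt_0_compat|]; lra).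
    assert (0 < a * b) by (apply Rmult_lt_0_compat; lra).
    destruct (Rlt_or_le 0 (sin (s' - s))) as [h|h]; auto.
    assert (a * b * sin (s' - s) <= 0).
    { rewrite <- (Rmult_0_r (a*b)). apply Rmult_le_compat_l; lra. }
    lra. }
  pose proof (ecc_near a b phi). pose proof (ecc_near a b phi'). fold s s' in H, H0.
  pose proof (sin_pos_range (s' - s) Hsin). lra.
Qed.

Fixpoint sumR (g : nat -> R) (n : nat) : R :=
  match n with O => 0 | S n => sumR g n + g n end.

Lemma sumR_ext g h n : (forall i, (i < n)%nat -> g i = h i) -> sumR g n = sumR h n.
Proof.
  induction n; intros H; simpl; auto.
  rewrite IHn by (intros; apply H; lia). rewrite H by lia. reflexivity.
Qed.

Lemma sumR_first g n : sumR g (S n) = g O + sumR (fun i => g (S i)) n.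
Proof. induction n; simpl in *; [ring|]. rewrite IHn. ring. Qed.

Lemma fold_sumR g m n : fold_right Rplus 0 (map g (seq m n)) = sumR (fun i => g (m + i)%nat) n.
Proof.
  revert m. induction n; intros m; [reflexivity|].
  cbn [seq map fold_right]. rewrite IHn. rewrite sumR_first.
  replace (m + 0)%nat with m by lia. f_equal.
  apply sumR_ext. intros. f_equal. lia.
Qed.

Lemma sumR_shift1 g N : g N = g O -> sumR (fun i => g (S i)) N = sumR g N.
Proof.
  intros H. pose proof (sumR_first g N). simpl in H0. lra.
Qed.

Lemma sumR_shift g N k : (forall i, g (i + N)%nat = g i) ->
  sumR (fun i => g (i + k)%nat) N = sumR g N.
Proof.
  intros Hp. induction k.
  - apply sumR_ext. intros. f_equal. lia.
  - rewrite <- IHk.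
    rewrite <- (sumR_shift1 (fun i => g (i + k)%nat)).
    + apply sumR_ext. intros. f_equal. lia.
    + cbv beta. rewrite Nat.add_0_l, Nat.add_comm. apply Hp.
Qed.

Lemma inv_focus_sym a b X :
  inv_circle (focus2 a b) (- fst X, - snd X) =
  (- fst (inv_circle (focus1 a b) X), - snd (inv_circle (focus1 a b) X)).
Proof.
  unfold inv_circle, focus1, focus2, padd, pscale, psub, nrm2; cbn [fst snd].
  set (c := sqrt (a^2 - b^2)).
  replace ((- fst X - c) ^ 2 + (- snd X - 0) ^ 2) with ((fst X - - c) ^ 2 + (snd X - 0) ^ 2) by ring.
  f_equal; ring.
Qed.

Lemma area_sym a b N k (P : nat -> pt) :
  (N = 2 * k)%nat ->
  (forall i, P (i + N)%nat = P i) ->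
  (forall i, P i = (- fst (P (i + k)%nat), - snd (P (i + k)%nat))) ->
  signed_area (fun i => inv_circle (focus1 a b) (P i)) N =
  signed_area (fun i => inv_circle (focus2 a b) (P i)) N.
Proof.
  intros HN Hper Hsym. unfold signed_area. f_equal.
  rewrite !fold_sumR.
  set (W := fun i => inv_circle (focus1 a b) (P i)).
  set (g := fun i => fst (W i) * snd (W (S i)) - fst (W (S i)) * snd (W i)).
  rewrite (sumR_ext _ g) by (intros; reflexivity).
  rewrite <- (sumR_shift g N k).
  - apply sumR_ext. intros i _. cbv beta.
    unfold g, W. rewrite !Nat.add_0_l. rewrite (Hsym i), (Hsym (S i)), !inv_focus_sym.
    replace (S i + k)%nat with (S (i + k)) by lia. cbn [fst snd]. ring.
  - intros i. unfold g, W. replace (S (i + N)) with (S i + N)%nat by lia. rewrite !Hper. reflexivity.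
Qed.

Lemma per_reduce (P : nat -> pt) N : (0 < N)%nat -> (forall i, P (i + N)%nat = P i) ->
  forall i, P i = P (i mod N).
Proof.
  intros HN Hp i.
  rewrite (Nat.div_mod i N) at 1 by lia.
  generalize (i / N)%nat. intros q. induction q.
  - f_equal. lia.
  - replace (N * S q + i mod N)%nat with ((N * q + i mod N) + N)%nat by lia. rewrite Hp. auto.
Qed.

Theorem mainTheorem4 (a b : R) (N : nat) (P : nat -> pt) :
  0 < b -> b < a -> (4 <= N)%nat -> Nat.Even N ->
  billiard_traj a b N P ->
  signed_area (fun i => inv_circle (focus1 a b) (P i)) N =
  signed_area (fun i => inv_circle (focus2 a b) (P i)) N.
Proof.
  intros Hb Hab HN4 [k HNk] Htraj.
  destruct Htraj as [Hper [Hell [Hdist [Hconv [[phi [Hpol [Hinc Htot]]] [Hrefl [al [be [[Hbe [Hal Hconf]] Htan]]]]]]]]].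
  assert (Hala : al < a) by (apply (caustic_inside a b al be (P O) (P 1%nat)); auto).
  set (lam := a^2 - al^2).
  assert (Hl : 0 < lam) by (unfold lam; nra).
  assert (Hbe2 : be^2 = b^2 - lam) by (unfold lam; lra).
  assert (Hal2 : al^2 = a^2 - lam) by (unfold lam; lra).
  assert (Hlb : lam < b^2) by nra.
  set (s := fun i => ecc a b (phi i)).
  assert (Hpt : forall i, (i <= N)%nat -> P i = (a * cos (s i), b * sin (s i))).
  { intros i Hi. pose proof (Hpol i Hi) as E. pose proof (Hell i) as He.
    rewrite E in He.
    destruct (ecc_point a b (nrm (P i)) (phi i) Hb Hab (sqrt_pos _) He) as [C S].
    rewrite E at 1. rewrite C, S. reflexivity. }
  assert (Hstep : forall i, (i < N)%nat -> s i < s (S i) < s i + PI).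
  { intros i Hi. apply (ecc_step a b (P i) (P (S i))); auto; try (apply Hpol; lia); apply Hinc; lia. }
  assert (HsN : s N = s O + 2 * PI).
  { unfold s. rewrite Htot. apply ecc_per. }
  set (K := Gf a b lam 0).
  set (FF := F a b lam).
  assert (Hchord : forall i, (i < N)%nat -> FF (s (S i)) - FF (s i) = K).
  { intros i Hi. unfold FF, K. apply chord_step; auto.
    pose proof (tangent_poly al be (P i) (P (S i)) Hbe Hal (Hdist i) (Htan i)) as T.
    rewrite (Hpt i), (Hpt (S i)) in T by lia. cbn [fst snd] in T.
    rewrite <- Hbe2, <- Hal2. rewrite <- T. ring. }
  assert (Htele : forall j i, (i + j <= N)%nat -> FF (s (i + j)%nat) - FF (s i) = INR j * K).
  { induction j; intros i Hij.
    - replace (i + 0)%nat with i by lia. simpl. ring.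
    - rewrite S_INR. replace (i + S j)%nat with (S (i + j)) by lia.
      pose proof (Hchord (i + j)%nat ltac:(lia)). pose proof (IHj i ltac:(lia)). lra. }
  set (Pi := FF (0 + PI) - FF 0).
  assert (Hhalf : forall x, FF (x + PI) - FF x = Pi).
  { intros x. unfold FF, Pi. apply F_halfper; auto. }
  assert (HNK : INR N * K = 2 * Pi).
  { pose proof (Htele N O ltac:(lia)). simpl in H. rewrite HsN in H.
    pose proof (Hhalf (s O)). pose proof (Hhalf (s O + PI)).
    replace (s O + PI + PI) with (s O + 2 * PI) in H1 by ring. lra. }
  assert (HkK : INR k * K = Pi).
  { rewrite HNk in HNK. rewrite mult_INR in HNK. simpl in HNK. lra. }
  assert (Hsym1 : forall i, (i <= k)%nat -> P (i + k)%nat = (- fst (P i), - snd (P i))).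
  { intros i Hi.
    pose proof (Htele k i ltac:(lia)). rewrite HkK in H.
    pose proof (Hhalf (s i)).
    assert (E : s (i + k)%nat = s i + PI).
    { apply (F_inj a b lam Hb Hab Hlb). fold FF. lra. }
    rewrite (Hpt (i + k)%nat) by lia. rewrite (Hpt i) by lia. rewrite E.
    rewrite neg_cos, neg_sin. cbn [fst snd]. f_equal; ring. }
  apply (area_sym a b N k P HNk); [intros; apply Hper|].
  assert (HN0 : (0 < N)%nat) by lia.
  assert (Hsym2 : forall i, (i < N)%nat -> P i = (- fst (P (i + k)%nat), - snd (P (i + k)%nat))).
  { intros i Hi. destruct (le_lt_dec i k) as [h|h].
    - rewrite (Hsym1 i h). cbn [fst snd]. destruct (P i). cbn [fst snd]. f_equal; ring.
    - replace (i + k)%nat with ((i - k) + N)%nat by lia. rewrite Hper.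
      replace i with ((i - k) + k)%nat at 1 by lia. apply Hsym1. lia. }
  intros i.
  assert (E1 : P i = P (i mod N)%nat) by (apply per_reduce; auto).
  assert (E2 : P (i + k)%nat = P (i mod N + k)%nat).
  { rewrite (per_reduce P N HN0 Hper (i + k)), (per_reduce P N HN0 Hper (i mod N + k)).
    rewrite Nat.add_mod_idemp_l by lia. reflexivity. }
  rewrite E1, E2. apply Hsym2. apply Nat.mod_upper_bound. lia.
Qed.
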